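(* Let $P$ be the set of primes and $S_P$ the group of permutations of $P$. For $\sigma\in S_P$ let $\hat\sigma$ be the unique automorphism of the multiplicative monoid $(\mathbb Q,\cdot)$ extending $\sigma$ (with $\hat\sigma(\pm1)=\pm1$, $\hat\sigma(0)=0$), and let $\mathbb Q_\sigma=(\mathbb Q,\cdot,+_\sigma)$ where $a+_\sigma b=\hat\sigma^{-1}(\hat\sigma(a)+\hat\sigma(b))$. Let $V_1=\bigoplus_{\sigma\in S_P}\mathbb Q_\sigma$ and $V_2=\bigoplus_{\sigma\in S_P\setminus\{\mathrm{id}\}}\mathbb Q_\sigma$, each a near vector space over $F=\mathbb Q$ (with $q\in\mathbb Q$ acting on the summand $\mathbb Q_\sigma$ by multiplication by $q$, and addition on each summand being $+_\sigma$). Then $BT(V_1)\neq BT(V_2)$ but $\bar F\cap\mathrm{Aut}(V_1)=\bar F\cap\mathrm{Aut}(V_2)$.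
   Context: A near vector space over $F$: $(V,+)$ a group, $F$ a set of endomorphisms containing $0,1,-1$, with $F\setminus\{0\}$ a subgroup of $\mathrm{Aut}(V,+)$, acting fixed point freely ($\alpha x=\beta x\Rightarrow\alpha=\beta$ or $x=0$), such that the quasi-kernel $Q(V)=\{u: \forall\alpha,\beta\in F\,\exists\gamma\in F\ \alpha u+\beta u=\gamma u\}$ generates $V$. For commutative $F$, $V$ decomposes as a direct sum of blocks (maximal regular near vector subspaces, each nonzero element of $Q(V)$ lying in exactly one), block $B_i$ being a vector space over a field $(F,+_{u_i},\circ)$ where $\alpha+_{u}\beta$ is the unique $\gamma$ with $\alpha u+\beta u=\gamma u$ for nonzero $u\in Q(V)\cap B_i$. The block type $BT(V)$ is the set of operations $\{+_{u_i}\}$ (equality as sets of operations). $\bar F$ is the set of formal finite sums $\alpha_1+_\cdot\cdots+_\cdot\alpha_n$ of elements of $F$, acting on $V$ by $v\mapsto\alpha_1(v)+\cdots+\alpha_n(v)$; $\bar F\cap\mathrm{Aut}(V)$ is the set of formal sums acting as automorphisms of $(V,+)$. *)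

(* Defs.v *)
From HB Require Import structures.
From mathcomp Require Import all_boot all_order all_algebra.
From Stdlib Require List.
Set Implicit Arguments. Unset Strict Implicit. Unset Printing Implicit Defensive.
Import Order.TTheory GRing.Theory Num.Theory.
Local Open Scope ring_scope.

Definition Pr : Type := {p : nat | prime p}.

Record SP : Type := MkSP {
  sp_fun : Pr -> Pr;
  sp_inv : Pr -> Pr;
  sp_funK : cancel sp_fun sp_inv;
  sp_invK : cancel sp_inv sp_fun }.

Definition sp_id : SP := @MkSP id id (fun _ => erefl) (fun _ => erefl).
Definition sp_inverse (s : SP) : SP :=
  @MkSP (sp_inv s) (sp_fun s) (sp_invK s) (sp_funK s).

Definition sigma_nat (s : SP) (p : nat) : nat :=
  match @insub nat (fun n => prime n) Pr p with
  | Some q => val (sp_fun s q)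
  | None => p
  end.

Definition hatn (s : SP) (n : nat) : nat :=
  (\prod_(p <- primes n) (sigma_nat s p) ^ (logn p n))%N.

Definition hatq (s : SP) (q : rat) : rat :=
  if q == 0 then 0
  else (if q < 0 then -1 else 1) *
       ((hatn s (absz (numq q)))%:R / (hatn s (absz (denq q)))%:R).

Definition addsig (s : SP) (a b : rat) : rat :=
  hatq (sp_inverse s) (hatq s a + hatq s b).

Section Generic.
Variables (V : Type) (add : V -> V -> V) (zero : V) (act : rat -> V -> V).

Definition quasi_kernel (u : V) : Prop :=
  forall a b : rat, exists c : rat, add (act a u) (act b u) = act c u.

(** block type: the set of operations +_u, u nonzero in Q(V)
    (alpha +_u beta is the gamma with alpha u + beta u = gamma u). *)
Definition block_type (op : rat -> rat -> rat) : Prop :=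
  exists u : V, quasi_kernel u /\ u <> zero /\
    forall a b : rat, add (act a u) (act b u) = act (op a b) u.

Definition fsum_act (l : seq rat) (v : V) : V :=
  foldr (fun a acc => add (act a v) acc) zero l.

Definition Fbar_Aut (l : seq rat) : Prop :=
  bijective (fsum_act l) /\
  forall v w : V, fsum_act l (add v w) = add (fsum_act l v) (fsum_act l w).
End Generic.

Section DirectSum.
Variables (I : Type) (s : I -> SP).

Definition DS : Type :=
  {v : I -> rat | exists l : list I, forall i, ~ List.In i l -> v i = 0}.

Lemma addsig00 (t : SP) : addsig t 0 0 = 0.
Proof.
have h0 : forall t0 : SP, hatq t0 0 = 0 by move=> t0; rewrite /hatq eqxx.
by rewrite /addsig !h0.
Qed.

Definition ds_zero : DS := exist _ (fun _ => 0) (ex_intro _ nil (fun _ _ => erefl)).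

Definition ds_add (u v : DS) : DS.
Proof.
refine (exist _ (fun i => addsig (s i) (proj1_sig u i) (proj1_sig v i)) _).
case: u => [f [l1 H1]]; case: v => [g [l2 H2]] /=.
exists (l1 ++ l2) => i Hi.
rewrite H1 ?H2 ?addsig00 // => H; apply: Hi; apply: List.in_or_app; tauto.
Defined.

Definition ds_act (q : rat) (v : DS) : DS.
Proof.
refine (exist _ (fun i => q * proj1_sig v i) _).
case: v => [f [l H]] /=; exists l => i Hi; by rewrite H ?mulr0.
Defined.
End DirectSum.

Definition V1 : Type := DS SP.
Definition SPnid : Type := {s : SP | s <> sp_id}.
Definition V2 : Type := DS SPnid.

Definition BT1 : (rat -> rat -> rat) -> Prop := block_type (@ds_add SP (fun s => s)) (ds_zero SP) (@ds_act SP).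
Definition BT2 : (rat -> rat -> rat) -> Prop := block_type (@ds_add SPnid (fun s => proj1_sig s)) (ds_zero SPnid) (@ds_act SPnid).
Definition FA1 : seq rat -> Prop := Fbar_Aut (@ds_add SP (fun s => s)) (ds_zero SP) (@ds_act SP).
Definition FA2 : seq rat -> Prop := Fbar_Aut (@ds_add SPnid (fun s => proj1_sig s)) (ds_zero SPnid) (@ds_act SPnid).

(* Main.v *)
Require Import Defs.
From HB Require Import structures.
From mathcomp Require Import all_boot all_order all_algebra.
From Stdlib Require ProofIrrelevance FunctionalExtensionality ClassicalEpsilon Classical_Prop.
Set Implicit Arguments. Unset Strict Implicit. Unset Printing Implicit Defensive.
Import Order.TTheory GRing.Theory Num.Theory.

Lemma hatn_range s n N : (n < N)%N ->
  hatn s n = (\prod_(0 <= q < N) sigma_nat s q ^ logn q n)%N.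
Proof.
move=> nN.
rewrite (bigID (fun q => q \in primes n)) /=.
rewrite [X in (_ * X)%N]big1 ?muln1; last first.
  by move=> q Hq; rewrite -logn_gt0 lt0n negbK in Hq; rewrite (eqP Hq).
rewrite -big_filter /hatn; apply: perm_big.
apply: uniq_perm; first exact: primes_uniq.
  by apply: filter_uniq; apply: iota_uniq.
move=> q; rewrite mem_filter mem_index_iota /=.
case Hq: (q \in primes n) => //=.
move: Hq; rewrite mem_primes => /and3P [_ n0 dq].
by rewrite (leq_ltn_trans (dvdn_leq n0 dq) nN).
Qed.

Lemma hatnM s m n : (0 < m)%N -> (0 < n)%N -> hatn s (m * n) = (hatn s m * hatn s n)%N.
Proof.
move=> m0 n0.
have H : forall k, (0 < k)%N -> (k <= m * n)%N -> hatn s k = (\prod_(0 <= q < (m*n).+1) sigma_nat s q ^ logn q k)%N.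
  by move=> k _ kl; apply: hatn_range.
rewrite H ?muln_gt0 ?m0 // H // ?H //; last by rewrite leq_pmulr.
  rewrite -big_split /=; apply: eq_bigr => q _; by rewrite lognM // expnD.
by rewrite leq_pmull.
Qed.

Lemma sigma_nat_prime s p : prime p -> prime (sigma_nat s p).
Proof. by move=> pp; rewrite /sigma_nat insubT /=; case: (sp_fun _ _). Qed.

Lemma hatn_gt0 s n : (0 < hatn s n)%N.
Proof.
rewrite /hatn big_seq; apply: prodn_cond_gt0 => q; rewrite mem_primes => /and3P [pq _ _].
by rewrite expn_gt0 prime_gt0 // sigma_nat_prime.
Qed.

Lemma hatn1 s : hatn s 1 = 1%N.
Proof. by rewrite /hatn big_nil. Qed.

Lemma hatn_prime s p : prime p -> hatn s p = sigma_nat s p.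
Proof. by move=> pp; rewrite /hatn primes_prime // big_seq1 logn_prime // eqxx expn1. Qed.

Lemma sigma_natK s p : prime p -> sigma_nat (sp_inverse s) (sigma_nat s p) = p.
Proof.
move=> pp; rewrite {2}/sigma_nat insubT /= /sigma_nat.
case: (sp_fun s _) (sp_funK s (Sub p pp)) => q qp /= E.
by rewrite insubT /= /= E.
Qed.

Lemma hatnK s n : (0 < n)%N -> hatn (sp_inverse s) (hatn s n) = n.
Proof.
elim: n {-2}n (leqnn n) => [|N IH] n nN n0; first by case: n n0 nN.
case: (ltngtP n 1) => [|n1|->]; first by case: n n0 {nN}.
  have pp := pdiv_prime n1.
  have [m Em] : exists m, n = (pdiv n * m)%N by exists (n %/ pdiv n); rewrite mulnC divnK // pdiv_dvd.
  have m0 : (0 < m)%N by move: n0; rewrite Em muln_gt0 => /andP[].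
  have mN : (m <= N)%N.
    have mn : (m < n)%N by rewrite {1}Em ltn_Pmull ?prime_gt1.
    by rewrite -ltnS (leq_trans mn nN).
  move: pp m0 Em mN; set p := pdiv n => pp m0 Em mN.
  rewrite Em.
  rewrite (hatnM s (prime_gt0 pp) m0).
  rewrite hatnM ?hatn_gt0 // (IH m) // (hatn_prime s pp) hatn_prime ?sigma_nat_prime // sigma_natK //.

by rewrite !hatn1.
Qed.

Local Open Scope ring_scope.

Lemma hatq0 s : hatq s 0 = 0.
Proof. by rewrite /hatq eqxx. Qed.

Lemma pos_frac (q : rat) : 0 < q ->
  q = (absz (numq q))%:R / (absz (denq q))%:R.
Proof.
move=> q0; rewrite -{1}(divq_num_den q).
have e1 : numq q = (absz (numq q))%:Z by rewrite gtz0_abs ?numq_gt0.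
have e2 : denq q = (absz (denq q))%:Z by rewrite gtz0_abs ?denq_gt0.
by rewrite {1}e1 {1}e2.
Qed.

Lemma hatn_ratio s a b m n : (0 < a)%N -> (0 < b)%N -> (0 < m)%N -> (0 < n)%N ->
  (a * n = m * b)%N ->
  (hatn s a)%:R / (hatn s b)%:R = (hatn s m)%:R / (hatn s n)%:R :> rat.
Proof.
move=> a0 b0 m0 n0 E; apply/eqP.
rewrite eqr_div ?pnatr_eq0 -?lt0n ?hatn_gt0 // -!natrM -hatnM // -hatnM //.
by rewrite E.
Qed.

Lemma hatq_frac s m n : (0 < m)%N -> (0 < n)%N ->
  hatq s (m%:R / n%:R) = (hatn s m)%:R / (hatn s n)%:R.
Proof.
move=> m0 n0.
have q0 : 0 < m%:R / n%:R :> rat by rewrite divr_gt0 // ltr0n.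
rewrite /hatq gt_eqF // ltNge ltW //= mul1r.
set q := m%:R / n%:R in q0 *.
have a0 : (0 < absz (numq q))%N by rewrite absz_gt0 numq_eq0 gt_eqF.
have b0 : (0 < absz (denq q))%N by rewrite absz_gt0 gt_eqF ?denq_gt0.
apply: hatn_ratio => //.
have E := pos_frac q0.
have : (m%:R / n%:R == (absz (numq q))%:R / (absz (denq q))%:R :> rat) by rewrite -E.
rewrite eqr_div ?pnatr_eq0 -?lt0n // -!natrM eqr_nat => /eqP ->.
by rewrite mulnC.
Qed.

Lemma trich (q : rat) : [\/ q < 0, 0 < q | q = 0].
Proof.
case: (eqVneq q 0) => [->|nq]; first by apply: Or33.
by case/orP: (lt_total nq) => h; [apply: Or31|apply: Or32].
Qed.

Lemma hatqN s q : hatq s (- q) = - hatq s q.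
Proof.
rewrite /hatq oppr_eq0 numqN denqN abszN oppr_lt0.
case: (trich q) => h; last by rewrite h eqxx oppr0.
  by rewrite lt_eqF // h ltNge ltW //= mulNr mul1r opprK.
by rewrite gt_eqF // h ltNge ltW //= mulNr mul1r.
Qed.

Lemma hatqM_pos s x y : 0 < x -> 0 < y -> hatq s (x * y) = hatq s x * hatq s y.
Proof.
move=> x0 y0; rewrite (pos_frac x0) (pos_frac y0) mulf_div -!natrM.
have a0 : forall q : rat, 0 < q -> (0 < absz (numq q))%N by move=> q q0; rewrite absz_gt0 numq_eq0 gt_eqF.
have b0 : forall q : rat, (0 < absz (denq q))%N by move=> q; rewrite absz_gt0 gt_eqF ?denq_gt0.
rewrite !hatq_frac ?muln_gt0 ?a0 ?b0 // !hatnM ?a0 ?b0 //.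
by rewrite !natrM mulf_div.
Qed.

Lemma hatqM s x y : hatq s (x * y) = hatq s x * hatq s y.
Proof.
have H : forall x y, 0 < x -> hatq s (x * y) = hatq s x * hatq s y.
  move=> x' y' x0; case: (trich y') => h; last by rewrite h mulr0 hatq0 mulr0.
    have := @hatqM_pos s x' (- y') x0; rewrite oppr_gt0 h => /(_ isT).
    by rewrite mulrN !hatqN mulrN => /oppr_inj.
  exact: hatqM_pos.
case: (trich x) => h; last by rewrite h mul0r hatq0 mul0r.
  have := H (- x) y; rewrite oppr_gt0 h => /(_ isT).
  by rewrite mulNr !hatqN mulNr => /oppr_inj.
exact: H.
Qed.

Lemma hatqK s x : hatq (sp_inverse s) (hatq s x) = x.
Proof.
have H : forall x, 0 < x -> hatq (sp_inverse s) (hatq s x) = x.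
  move=> q q0; rewrite [in RHS](pos_frac q0) {1}(pos_frac q0).
  have a0 : (0 < absz (numq q))%N by rewrite absz_gt0 numq_eq0 gt_eqF.
  have b0 : (0 < absz (denq q))%N by rewrite absz_gt0 gt_eqF ?denq_gt0.
  by rewrite hatq_frac // hatq_frac ?hatn_gt0 // !hatnK.
case: (trich x) => h; last by rewrite h !hatq0.
  by have := H (- x); rewrite oppr_gt0 !hatqN h => /(_ isT) /oppr_inj.
exact: H.
Qed.

Lemma hatqK' s x : hatq s (hatq (sp_inverse s) x) = x.
Proof. exact: (hatqK (sp_inverse s) x). Qed.

Lemma addsig_scal s a b x :
  addsig s (a * x) (b * x) = x * hatq (sp_inverse s) (hatq s a + hatq s b).
Proof. by rewrite /addsig !hatqM -mulrDl hatqM hatqK mulrC. Qed.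

Lemma addsig_mul s x y c : addsig s (x * c) (y * c) = addsig s x y * c.
Proof. by rewrite /addsig !hatqM -mulrDl hatqM hatqK. Qed.

Definition cc (s : SP) (l : seq rat) : rat :=
  hatq (sp_inverse s) (\sum_(a <- l) hatq s a).

Lemma ds_ext I (u v : DS I) :
  (forall i, proj1_sig u i = proj1_sig v i) -> u = v.
Proof.
case: u v => [f Hf] [g Hg] /= H.
have E := FunctionalExtensionality.functional_extensionality _ _ H; subst g.
by rewrite (ProofIrrelevance.proof_irrelevance _ Hf Hg).
Qed.

Lemma fsum_comp I (s : I -> SP) l (v : DS I) i :
  proj1_sig (fsum_act (@ds_add I s) (ds_zero I) (@ds_act I) l v) i
  = proj1_sig v i * cc (s i) l.
Proof.
elim: l => [|a l IH] /=; first by rewrite /cc big_nil hatq0 mulr0.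
rewrite IH -[X in addsig _ _ X]mulrC addsig_scal /cc big_cons hatqK'.
by [].
Qed.

Lemma cc_eq0 s l : (cc s l == 0) = (\sum_(a <- l) hatq s a == 0).
Proof.
apply/eqP/eqP => [h|h]; last by rewrite /cc h hatq0.
by rewrite -(hatqK' s (\sum_(a <- l) hatq s a)) -/(cc s l) h hatq0.
Qed.

Lemma FA_char I (s : I -> SP) l :
  Fbar_Aut (@ds_add I s) (ds_zero I) (@ds_act I) l <->
  (forall i, \sum_(a <- l) hatq (s i) a != 0).
Proof.
split.
  move=> [[g gK Kg] _] i; rewrite -cc_eq0; apply/negP => /eqP h.
  pose d := fun j => if ClassicalEpsilon.excluded_middle_informative (j = i) then 1 else 0 : rat.
  have dP : exists l0 : list I, forall j, ~ List.In j l0 -> d j = 0.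
    exists (i :: nil) => j hj; rewrite /d.
    case: ClassicalEpsilon.excluded_middle_informative => // e.
    by exfalso; apply: hj; left.
  pose v := exist _ d dP : DS I.
  have E : fsum_act (@ds_add I s) (ds_zero I) (@ds_act I) l v =
           fsum_act (@ds_add I s) (ds_zero I) (@ds_act I) l (ds_zero I).
    apply: ds_ext => j; rewrite !fsum_comp /= mul0r /d.
    case: ClassicalEpsilon.excluded_middle_informative => e; last by rewrite mul0r.
    by subst j; rewrite h mulr0.
  have := congr1 g E; rewrite !gK => /(congr1 (fun w => proj1_sig w i)) /=.
  rewrite /d; case: ClassicalEpsilon.excluded_middle_informative => // _.
move=> H.
have Hc : forall i, cc (s i) l != 0 by move=> i; rewrite cc_eq0.
split.
  pose ginv := fun v : DS I => (fun i => proj1_sig v i / cc (s i) l).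
  have gP : forall v : DS I, exists l0 : list I, forall j, ~ List.In j l0 -> ginv v j = 0.
    move=> [f [l0 Hl0]]; exists l0 => j hj; by rewrite /ginv /= Hl0 ?mul0r.
  exists (fun v => exist _ (ginv v) (gP v)) => v; apply: ds_ext => i.
    by rewrite /= /ginv fsum_comp mulfK.
  by rewrite fsum_comp /= /ginv divfK.
move=> v w; apply: ds_ext => i; rewrite /= !fsum_comp /=.
by rewrite addsig_mul.
Qed.

Lemma hatn_fix s n : (0 < n)%N ->
  (forall p, prime p -> (p <= n)%N -> sigma_nat s p = p) -> hatn s n = n.
Proof.
move=> n0 H.
rewrite (hatn_range s (ltnSn n)) -{3}(partnT n0) (widen_partn _ (leqnn n)) big_mkcond /=.
apply: eq_bigr => q _.
case: (posnP (logn q n)) => [->|lq]; first by rewrite !expn0.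
move: (lq); rewrite logn_gt0 mem_primes => /and3P [pq _ dq].
by rewrite H // dvdn_leq.
Qed.

Lemma hatq_fix s N x :
  (forall p, prime p -> (p <= N)%N -> sigma_nat s p = p) ->
  (absz (numq x) <= N)%N -> (absz (denq x) <= N)%N -> hatq s x = x.
Proof.
move=> H.
have Hp : forall y : rat, 0 < y -> (absz (numq y) <= N)%N -> (absz (denq y) <= N)%N -> hatq s y = y.
  move=> y y0 a b.
  have a0 : (0 < absz (numq y))%N by rewrite absz_gt0 numq_eq0 gt_eqF.
  have b0 : (0 < absz (denq y))%N by rewrite absz_gt0 gt_eqF ?denq_gt0.
  rewrite {1}(pos_frac y0) hatq_frac // !hatn_fix -?(pos_frac y0) // => p pp pl;
   apply: H => //; exact: leq_trans pl _.
case: (trich x) => h; last by rewrite h hatq0.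
  move=> a b; have := Hp (- x); rewrite oppr_gt0 numqN denqN abszN hatqN h => /(_ isT a b).
  by move/oppr_inj.
exact: Hp.
Qed.

Lemma sigma_nat_val s (q : Pr) : sigma_nat s (val q) = val (sp_fun s q).
Proof. by rewrite /sigma_nat valK. Qed.

Lemma hatq_idf s x : (forall q : Pr, sp_fun s q = q) -> hatq s x = x.
Proof.
move=> H; apply: (hatq_fix (N := maxn (absz (numq x)) (absz (denq x)))).
- move=> p pp _; have -> : p = val (Sub p pp : Pr) by [].
  by rewrite sigma_nat_val H.
- exact: leq_maxl.
- exact: leq_maxr.
Qed.

Definition tr (a b x : Pr) : Pr := if x == a then b else if x == b then a else x.

Lemma tr_inv a b : cancel (tr a b) (tr a b).
Proof.
move=> x; rewrite /tr.
case: (eqVneq x a) => [->|xa].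
  by case: (eqVneq b a) => [->|ba]; rewrite ?eqxx // ba eqxx.
case: (eqVneq x b) => [->|xb]; first by rewrite eqxx.
by rewrite (negbTE xa) (negbTE xb).
Qed.

Definition swap (a b : Pr) : SP := MkSP (tr_inv a b) (tr_inv a b).

Lemma exists_fix_swap N : exists s : SP, s <> sp_id /\
  forall p, prime p -> (p <= N)%N -> sigma_nat s p = p.
Proof.
case: (prime_above N) => p1 Np1 pp1.
case: (prime_above p1) => p2 p12 pp2.
pose a := (Sub p1 pp1 : Pr); pose b := (Sub p2 pp2 : Pr).
exists (swap a b); split.
  move=> E; have := congr1 (fun t => val (sp_fun t a)) E.
  rewrite /= /tr eqxx /= => e.
  by move: p12; rewrite e ltnn.
move=> p pp pN.
have -> : p = val (Sub p pp : Pr) by [].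
rewrite sigma_nat_val /= /tr.
have ha : ((Sub p pp : Pr) == a) = false.
  apply/negbTE; apply/eqP => /(congr1 val) /= e.
  by move: Np1; rewrite -e ltnNge pN.
have hb : ((Sub p pp : Pr) == b) = false.
  apply/negbTE; apply/eqP => /(congr1 val) /= e.
  by move: (ltn_trans Np1 p12); rewrite -e ltnNge pN.
by rewrite ha hb.
Qed.

Lemma sp_eq_id s : (forall q : Pr, sp_fun s q = q) -> s = sp_id.
Proof.
case: s => f g Hf Hg /= H.
have ef : f = id := FunctionalExtensionality.functional_extensionality _ _ H.
subst f.
have eg : g = id.
  by apply: FunctionalExtensionality.functional_extensionality => x; apply: Hf.
subst g; rewrite /sp_id; f_equal; apply: ProofIrrelevance.proof_irrelevance.
Qed.

Lemma part2 l : FA1 l <-> FA2 l.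
Proof.
rewrite /FA1 /FA2 !FA_char; split.
  by move=> H [s hs]; apply: H.
move=> H s.
case: (Classical_Prop.classic (s = sp_id)) => [e|ne]; last by apply: (H (exist _ s ne)).
subst s.
pose N := \max_(a <- l) maxn (absz (numq a)) (absz (denq a)).
case: (exists_fix_swap N) => t [tne tfix].
have := H (exist _ t tne); rewrite /=.
rewrite (eq_big_seq (fun a => a)); last first.
  move=> a al; apply: (hatq_fix tfix).
    apply: leq_trans (leq_maxl _ _) _.
    exact: (@leq_bigmax_seq _ l xpredT (fun a : rat => maxn (absz (numq a)) (absz (denq a))) a al).
  apply: leq_trans (leq_maxr _ _) _.
  exact: (@leq_bigmax_seq _ l xpredT (fun a : rat => maxn (absz (numq a)) (absz (denq a))) a al).
have E2 : \sum_(a <- l) hatq sp_id a = \sum_(a <- l) a.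
  by apply: eq_bigr => a _; apply: hatq_idf.
by rewrite E2.
Qed.

Lemma BT1_add : BT1 +%R.
Proof.
pose d := fun j => if ClassicalEpsilon.excluded_middle_informative (j = sp_id) then 1 else 0 : rat.
have dP : exists l0 : list SP, forall j, ~ List.In j l0 -> d j = 0.
  exists (sp_id :: nil) => j hj; rewrite /d.
  case: ClassicalEpsilon.excluded_middle_informative => // e.
  by exfalso; apply: hj; left.
pose u := exist _ d dP : DS SP.
have Heq : forall a b : rat, ds_add (fun s => s) (ds_act a u) (ds_act b u) = ds_act (a + b) u.
  move=> a b; apply: ds_ext => i /=; rewrite addsig_scal /d.
  case: ClassicalEpsilon.excluded_middle_informative => e; last by rewrite mul0r mulr0.
  subst i; rewrite !hatq_idf //= mul1r mulr1 //.
exists u; split; first by move=> a b; exists (a + b); apply: Heq.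
split; last exact: Heq.
move=> /(congr1 (fun w => proj1_sig w sp_id)) /=; rewrite /d.
case: ClassicalEpsilon.excluded_middle_informative => // _.
Qed.

Lemma not_BT2_add : ~ BT2 +%R.
Proof.
move=> [u [_ [un Heq]]].
have [i hi] : exists i, proj1_sig u i <> 0.
  apply: Classical_Prop.NNPP => hn; apply: un; apply: ds_ext => i /=.
  apply: Classical_Prop.NNPP => hi; apply: hn; exists i; exact: hi.
case: i hi => t tne /= hi.
have hx : proj1_sig u (exist _ t tne) != 0 by apply/eqP.
have hadd : forall a b, hatq t (a + b) = hatq t a + hatq t b.
  move=> a b; have := congr1 (fun w => proj1_sig w (exist _ t tne)) (Heq a b).
  rewrite /= addsig_scal [RHS]mulrC => /(mulfI hx) e.
  by rewrite -e hatqK'.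
have h1 : hatq t 1 = 1.
  by have := @hatq_frac t 1 1 isT isT; rewrite hatn1 !divr1.
have hnat : forall n : nat, hatq t n%:R = n%:R.
  elim=> [|n IH]; first by rewrite hatq0.
  by rewrite mulrS hadd h1 IH.
suff E : t = sp_id by exact: tne E.
apply: sp_eq_id => q; apply: val_inj.
have := @hatq_frac t (val q) 1 (prime_gt0 (valP q)) isT.
rewrite hatn1 !divr1 hnat hatn_prime ?(valP q) // sigma_nat_val => /eqP.
by rewrite eqr_nat => /eqP.
Qed.

Theorem mainTheorem9 :
  ~ (forall op : rat -> rat -> rat, BT1 op <-> BT2 op) /\
  (forall l : seq rat, FA1 l <-> FA2 l).
Proof.
split; last exact: part2.
by move=> H; apply: not_BT2_add; apply/H; apply: BT1_add.
Qed.
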